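(* For a $q$-spin system with interaction matrix $\mathbf{B}$ and $\Delta\geq3$, \[\max_{\boldsymbol{\alpha},\boldsymbol{\beta}\in\triangle_q}\Psi_1(\boldsymbol{\alpha},\boldsymbol{\beta})=\max_{\mathbf{r},\mathbf{c}}\Phi(\mathbf{r},\mathbf{c}).\]
   Context: $\mathbf{B}=(B_{ij})$ is a symmetric $q\times q$ nonnegative matrix (irreducible, standing assumption); $\triangle_q$ is the probability simplex in $\mathbb{R}^q$. $\Psi_1(\boldsymbol{\alpha},\boldsymbol{\beta})=\max_{\mathbf{x}}[(\Delta-1)(\sum_i\alpha_i\ln\alpha_i+\sum_j\beta_j\ln\beta_j)+\Delta\sum_{i,j}x_{ij}(\ln B_{ij}-\ln x_{ij})]$ over nonnegative $\mathbf{x}\in\mathbb{R}^{q\times q}$ with $\sum_jx_{ij}=\alpha_i$, $\sum_ix_{ij}=\beta_j$ (conventions $\ln0=-\infty$, $0\ln0=0$); it equals $\lim_n\frac1n\log\mathbf{E}[Z_G^{\boldsymbol{\alpha},\boldsymbol{\beta}}]$ for a random $\Delta$-regular bipartite graph formed as the union of $\Delta$ random perfect matchings on $n+n$ vertices. With $p=\Delta/(\Delta-1)$, for nonnegative nonzero $\mathbf{r},\mathbf{c}\in\mathbb{R}^q$, $\Phi$ is defined by $\exp(\Phi(\mathbf{r},\mathbf{c})/\Delta)=\frac{\mathbf{r}^{\intercal}\mathbf{B}\mathbf{c}}{\|\mathbf{r}\|_p\|\mathbf{c}\|_p}$. *)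

(* Defs.v *)
From HB Require Import structures.
From mathcomp Require Import all_boot all_order all_algebra.
From mathcomp Require Import all_classical all_reals all_analysis.
Set Implicit Arguments. Unset Strict Implicit. Unset Printing Implicit Defensive.
Import Order.TTheory GRing.Theory Num.Theory.
Local Open Scope ring_scope.
Local Open Scope classical_set_scope.

Section Defs.
Variable R : realType.
Variable q : nat.

Definition simplex (a : 'I_q -> R) : Prop :=
  (forall i, 0 <= a i) /\ \sum_(i < q) a i = 1.

Definition xlnx (t : R) : R := if t == 0 then 0 else t * ln t.

(* x (ln b - ln x) with ln 0 = -oo and 0 ln 0 = 0 (and 0 * (-oo) = 0) *)
Definition xterm (b t : R) : \bar R :=
  if t == 0 then 0%E
  else if b == 0 then -oo%E
  else (t * (ln b - ln t))%:E.

Definition sym_nonneg_irreducible (B : 'M[R]_q) : Prop :=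
  (forall i j, B i j = B j i) /\ (forall i j, 0 <= B i j) /\
  (forall i j, exists k : nat, 0 < (B ^+ k) i j).

Definition coupling (a b : 'I_q -> R) (x : 'I_q -> 'I_q -> R) : Prop :=
  (forall i j, 0 <= x i j) /\
  (forall i, \sum_(j < q) x i j = a i) /\
  (forall j, \sum_(i < q) x i j = b j).

Definition psi1_obj (D : nat) (B : 'M[R]_q) (a b : 'I_q -> R)
    (x : 'I_q -> 'I_q -> R) : \bar R :=
  (((D%:R - 1) * (\sum_(i < q) xlnx (a i) + \sum_(j < q) xlnx (b j)))%:E
   + (D%:R)%:E * (\sum_(i < q) \sum_(j < q) xterm (B i j) (x i j)))%E.

Definition Psi1 (D : nat) (B : 'M[R]_q) (a b : 'I_q -> R) : \bar R :=
  ereal_sup [set psi1_obj D B a b x | x in coupling a b].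

Definition pnorm (p : R) (r : 'I_q -> R) : R :=
  (\sum_(i < q) r i `^ p) `^ (p^-1).

Definition bilin (B : 'M[R]_q) (r c : 'I_q -> R) : R :=
  \sum_(i < q) \sum_(j < q) r i * B i j * c j.

Definition Phi (D : nat) (B : 'M[R]_q) (r c : 'I_q -> R) : \bar R :=
  let p := D%:R / (D%:R - 1) in
  if bilin B r c == 0 then (-oo)%E
  else (D%:R * ln (bilin B r c / (pnorm p r * pnorm p c)))%:E.

Definition nonneg_nonzero (r : 'I_q -> R) : Prop :=
  (forall i, 0 <= r i) /\ (exists i, r i != 0).

End Defs.

(* Main.v *)
Require Import Defs.
From HB Require Import structures.
From mathcomp Require Import all_boot all_order all_algebra.
From mathcomp Require Import all_classical all_reals all_analysis.
From mathcomp Require Import ring lra.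
Import Order.TTheory GRing.Theory Num.Theory.
Local Open Scope ring_scope.

Module Helpers.
Import numFieldNormedType.Exports.
Set Implicit Arguments. Unset Strict Implicit. Unset Printing Implicit Defensive.
Local Open Scope classical_set_scope.

Section Ex.
Variable R : realType.

Lemma cont_sum (T : topologicalType) (I : finType) (f : I -> T -> R) :
  (forall i, continuous (f i)) -> continuous (fun x => \sum_i f i x).
Proof.
move=> fc x; apply: cvg_big => //; first exact: add_continuous.
by move=> i _; exact: fc.
Qed.

Lemma cont_coord q i : continuous (fun v : 'rV[R]_q => v ord0 i).
Proof. exact: coord_continuous. Qed.

Lemma cont_fst q : continuous (fun p : 'rV[R]_q * 'rV[R]_q => p.1).
Proof. by move=> x; apply: cvg_fst. Qed.
Lemma cont_snd q : continuous (fun p : 'rV[R]_q * 'rV[R]_q => p.2).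
Proof. by move=> x; apply: cvg_snd. Qed.

Definition Wr q (n : nat) : set 'rV[R]_q :=
  [set v | (forall i, 0 <= v ord0 i) /\ \sum_i v ord0 i ^+ n.+1 = 1].

Arguments Wr : clear implicits.

Lemma Wr_compact q n : compact (Wr q n).
Proof.
apply: (@subclosed_compact _ _ [set v : 'rV[R]_q | forall i, `[(0:R), 1]%classic (v ord0 i)]).
- have -> : Wr q n = (\bigcap_(i in setT) ((fun v : 'rV[R]_q => v ord0 i) @^-1` [set x | 0 <= x]))
     `&` ((fun v : 'rV[R]_q => \sum_i v ord0 i ^+ n.+1) @^-1` [set x | x = 1]).
    apply/seteqP; split => v /=.
      by move=> [h1 h2]; split => // i _; exact: h1.
    by move=> [h1 h2]; split => // i; exact: h1.
  apply: closedI.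
    apply: closed_bigI => i _.
    by move: (@cont_coord q i) => /continuous_closedP; apply; exact: closed_ge.
  have hc : continuous (fun v : 'rV[R]_q => \sum_i v ord0 i ^+ n.+1).
    apply: cont_sum => i v.
    exact: (@continuous_comp _ _ _ (fun v : 'rV[R]_q => v ord0 i) (fun x : R => x ^+ n.+1) v (@cont_coord q i v) (@exprn_continuous R n.+1 _)).
  by move/continuous_closedP: hc; apply; exact: closed_eq.
- by apply: (@rV_compact _ _ (fun=> `[(0:R), 1]%classic)) => _; exact: segment_compact.
- move=> v [h1 h2] i; rewrite /= in_itv /= h1 /=.
  rewrite leNgt; apply/negP => hv.
  have : v ord0 i ^+ n.+1 <= 1.
    rewrite -h2 (bigD1 i) //= lerDl; apply: sumr_ge0 => j _; exact: exprn_ge0.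
  by rewrite leNgt exprn_egt1 ?hv.
Qed.

Definition Gf q (s : nat) (B : 'M[R]_q) (w z : 'rV[R]_q) : R :=
  \sum_i \sum_j w ord0 i ^+ s * B i j * z ord0 j ^+ s.

Lemma exists_max q n s (B : 'M[R]_q) : (0 < q)%N ->
  exists w z : 'rV[R]_q, [/\ Wr q n w, Wr q n z &
    forall w' z', Wr q n w' -> Wr q n z' -> Gf s B w' z' <= Gf s B w z].
Proof.
move=> hq.
pose f := fun p : 'rV[R]_q * 'rV[R]_q => Gf s B p.1 p.2.
have fc : continuous f.
  apply: cont_sum => i; apply: cont_sum => j p.
  apply: cvgM; [apply: cvgM|].
  - exact: (@continuous_comp _ _ _ (fun p : 'rV[R]_q * 'rV[R]_q => p.1 ord0 i) (fun x : R => x ^+ s) p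
       (@continuous_comp _ _ _ (fun p : 'rV[R]_q * 'rV[R]_q => p.1) (fun v : 'rV[R]_q => v ord0 i) p
          (@cont_fst q p) (@cont_coord q i _)) (@exprn_continuous R s _)).
  - exact: cvg_cst.
  - exact: (@continuous_comp _ _ _ (fun p : 'rV[R]_q * 'rV[R]_q => p.2 ord0 j) (fun x : R => x ^+ s) p
       (@continuous_comp _ _ _ (fun p : 'rV[R]_q * 'rV[R]_q => p.2) (fun v : 'rV[R]_q => v ord0 j) p
          (@cont_snd q p) (@cont_coord q j _)) (@exprn_continuous R s _)).
pose i0 : 'I_q := Ordinal hq.
pose e0 : 'rV[R]_q := \row_j ((j == i0)%:R).
have We0 : Wr q n e0.
  split=> [i|]; first by rewrite mxE ler0n.
  rewrite (bigD1 i0) //= big1 ?addr0; first by rewrite mxE eqxx expr1n.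
  by move=> j /negPf hj; rewrite mxE hj expr0n.
have [c cA cmax] := @compact_EVT_max _ R f (Wr q n `*` Wr q n)
  (ex_intro _ (e0, e0) (conj We0 We0)) (compact_setX (@Wr_compact q n) (@Wr_compact q n))
  (@continuous_subspaceT _ _ _ f fc).
exists c.1, c.2; move: cA; rewrite inE => -[c1 c2]; split => // w' z' hw hz.
by apply: (cmax (w', z')); rewrite inE.
Qed.
End Ex.

Local Close Scope classical_set_scope.

Section A.
Variable R : realType.

Definition amgm_mu (s : nat) (a b : R) := (s%:R * a ^+ s.+1 + b ^+ s.+1) / s.+1%:R.

Lemma amgm (s : nat) (a b : R) : (0 < s)%N -> 0 <= a -> 0 <= b ->
  a ^+ s * b <= amgm_mu s a b ?= iff (a == b).
Proof.
move=> s0 a0 b0.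
pose E := fun i : 'I_s.+1 => if (i < s)%N then a ^+ s.+1 else b ^+ s.+1.
have E0 : {in predT, forall i, 0 <= E i}.
  by move=> i _; rewrite /E; case: ifP => _; exact: exprn_ge0.
have := leif_AGM E0.
rewrite card_ord.
have -> : \prod_(i in predT) E i = (a ^+ s * b) ^+ s.+1.
  rewrite big_ord_recr /= /E ltnn.
  rewrite (eq_bigr (fun _ => a ^+ s.+1)); last by move=> i _; rewrite /= ltn_ord.
  by rewrite prodr_const card_ord exprMn -!exprM mulnC.
have -> : \sum_(i in predT) E i = s%:R * a ^+ s.+1 + b ^+ s.+1.
  rewrite big_ord_recr /= /E ltnn.
  rewrite (eq_bigr (fun _ => a ^+ s.+1)); last by move=> i _; rewrite /= ltn_ord.
  by rewrite sumr_const card_ord mulr_natl.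
have mu0 : 0 <= amgm_mu s a b.
  by rewrite /amgm_mu divr_ge0 ?ler0n // addr_ge0 ?mulr_ge0 ?exprn_ge0 ?ler0n.

move=> H; have hle := H.1; have heq := H.2; clear H.
have L1 : a ^+ s * b <= amgm_mu s a b.
  rewrite -(@ler_pXn2r _ s.+1) // ?nnegrE ?mulr_ge0 ?exprn_ge0 //; exact: hle.
have L2 : (a ^+ s * b == amgm_mu s a b) = (a == b).
  rewrite -(@eqrXn2 _ s.+1 _ _ (ltn0Sn s) (mulr_ge0 (exprn_ge0 _ a0) b0) mu0).
  rewrite [amgm_mu _ _ _]/amgm_mu heq.
  apply/idP/idP.
    move=> /forallP /(_ ord0) /forall_inP /(_ ord_max isT).
    by rewrite /E /= s0 ltnn eqrXn2.
  move=> /eqP ab; apply/forallP => i; apply/forall_inP => j _.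
  by rewrite /E ab; case: ifP; case: ifP.

exact: (L1, L2).
Qed.

Definition Wf q (s : nat) (w : 'I_q -> R) :=
  (forall i, 0 <= w i) /\ \sum_i w i ^+ s.+1 = 1.

Lemma fixpt q s (v w : 'I_q -> R) : (0 < s)%N -> (forall i, 0 <= v i) -> Wf s w ->
  (forall u, Wf s u -> \sum_i u i ^+ s * v i <= \sum_i w i ^+ s * v i) ->
  0 < \sum_i w i ^+ s * v i ->
  forall i, w i ^+ s.+1 * (\sum_k w k ^+ s * v k) = w i ^+ s * v i.
Proof.
move=> s0 v0 [w0 w1] wmax.
set M := \sum_k w k ^+ s * v k => M0.
have SV : 0 < \sum_i v i ^+ s.+1.
  rewrite lt_neqAle sumr_ge0 ?andbT; last by move=> i _; exact: exprn_ge0.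
  apply/negP => /eqP /esym h.
  have vz : forall i, v i = 0.
    move=> i; have := psumr_eq0P (P := predT) (fun j _ => exprn_ge0 s.+1 (v0 j)) h.
    by move=> /(_ i isT) /eqP; rewrite expf_eq0 /= => /eqP.
  by move: M0; rewrite /M big1 ?ltxx // => i _; rewrite vz mulr0.
set N := (\sum_i v i ^+ s.+1) `^ (s.+1%:R^-1).
have N0 : 0 < N by rewrite powR_gt0.
have ND : N ^+ s.+1 = \sum_i v i ^+ s.+1.
  by rewrite -powR_mulrn ?powR_ge0 // -powRrM mulVf ?pnatr_eq0 // powRr1 // ltW.
pose u i := v i / N.
have Wu : Wf s u.
  split=> [i|]; first by rewrite /u divr_ge0 // ltW.
  rewrite /u; under eq_bigr do rewrite expr_div_n.
  by rewrite -mulr_suml -ND divff // expf_neq0 // gt_eqF.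
have NM : N <= M.
  have := wmax u Wu.
  have -> : \sum_i u i ^+ s * v i = N.
    rewrite /u; under eq_bigr do rewrite expr_div_n mulrAC -exprSr.
    rewrite -mulr_suml -ND exprSr -mulrA.
    rewrite mulrC -mulrA mulVf ?mulr1 //.
    by rewrite expf_neq0 // gt_eqF.
  by [].
pose mu i := amgm_mu s (w i) (u i).
have smu : \sum_i mu i = 1.
  rewrite /mu /amgm_mu -mulr_suml big_split /= -mulr_sumr w1.
  by case: Wu => _ ->; rewrite mulr1 -natr1 divff // pnatr_eq0.
have hwu : \sum_i w i ^+ s * u i = M / N.
  by rewrite /u; under eq_bigr do rewrite mulrA; rewrite -mulr_suml.
have le1 : M / N <= 1.
  rewrite -hwu -smu; apply: ler_sum => i _; rewrite /mu.
  by apply: (amgm s0 (w0 i) (proj1 Wu i)).1.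
have MN : M = N.
  apply/eqP; rewrite eq_le NM andbT.
  by move: le1; rewrite ler_pdivrMr // mul1r.
have eq1 : \sum_i (mu i - w i ^+ s * u i) = 0.
  by rewrite sumrB smu hwu MN divff ?subrr // gt_eqF.
have nn : forall j, 0 <= mu j - w j ^+ s * u j.
  by move=> j; rewrite subr_ge0; exact: (amgm s0 (w0 j) (proj1 Wu j)).1.
have wu : forall i, w i = u i.
  move=> i.
  have H := psumr_eq0P (P := predT) (fun j _ => nn j) eq1 (i := i) isT.
  have hl := amgm s0 (w0 i) (proj1 Wu i).
  apply/eqP; rewrite -hl.2 eq_sym -subr_eq0; exact/eqP.
move=> i; rewrite exprSr -mulrA; congr (_ * _).
by rewrite wu /u MN mulrAC -mulrA divff ?mulr1 // gt_eqF.
Qed.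
End A.


Section M.
Variable R : realType.
Variable q : nat.
Implicit Types (B : 'M[R]_q) (x : 'I_q -> 'I_q -> R) (a b : 'I_q -> R).

Definition rterm (b t : R) : R := if t == 0 then 0 else t * (ln b - ln t).

Lemma xterm_fin B x : (forall i j, x i j != 0 -> B i j != 0) ->
  (\sum_i \sum_j xterm (B i j) (x i j) = (\sum_i \sum_j rterm (B i j) (x i j))%:E)%E.
Proof.
move=> h; rewrite -sumEFin; apply: eq_bigr => i _; rewrite -sumEFin.
apply: eq_bigr => j _; rewrite /xterm /rterm.
case: ifP => // /negbT x0; have := h i j x0; by move=> /negPf ->.
Qed.

Lemma xterm_ninf B x : (exists i j, x i j != 0 /\ B i j = 0) ->
  (\sum_i \sum_j xterm (B i j) (x i j) = -oo)%E.
Proof.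
move=> [i [j [x0 b0]]]; apply/esum_eqNyP; exists i; split.
- by rewrite mem_index_enum.
- by [].
apply/esum_eqNyP; exists j; split.
- by rewrite mem_index_enum.
- by [].
by rewrite /xterm (negPf x0) b0 eqxx.
Qed.

Lemma rterm_mul (b t L : R) : 0 < t -> 0 < b -> ln t = ln b - L -> rterm b t = t * L.
Proof.
move=> t0 b0 h; rewrite /rterm gt_eqF // h; congr (_ * _).
by rewrite opprB addrC subrK.
Qed.

Lemma coupling_ge a b x i j : coupling a b x -> x i j <= a i.
Proof.
move=> [x0 [xr _]]; rewrite -xr (bigD1 j) //= lerDl.
by apply: sumr_ge0 => k _.
Qed.

Lemma coupling_geT a b x i j : coupling a b x -> x i j <= b j.
Proof.
move=> [x0 [_ xc]]; rewrite -xc (bigD1 i) //= lerDl.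
by apply: sumr_ge0 => k _.
Qed.

Lemma coupling_sum a b x : coupling a b x -> \sum_i \sum_j x i j = \sum_i a i.
Proof. by move=> [_ [xr _]]; apply: eq_bigr => i _; rewrite xr. Qed.

Lemma sum_split3 a b x (L : R) (f g : 'I_q -> R) : coupling a b x ->
  \sum_i \sum_j x i j * (L - f i - g j) =
  L * \sum_i a i - \sum_i a i * f i - \sum_j b j * g j.
Proof.
move=> [x0 [xr xc]].
have -> : \sum_i \sum_j x i j * (L - f i - g j) =
   \sum_i \sum_j (x i j * L) - \sum_i \sum_j (x i j * f i) - \sum_i \sum_j (x i j * g j).
  rewrite -!sumrB; apply: eq_bigr => i _; rewrite -!sumrB; apply: eq_bigr => j _.
  by rewrite !mulrBr.
congr (_ - _ - _).
- rewrite mulr_sumr; apply: eq_bigr => i _; by rewrite -mulr_suml xr mulrC.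
- apply: eq_bigr => i _; by rewrite -mulr_suml xr.
- rewrite exchange_big /=; apply: eq_bigr => j _; by rewrite -mulr_suml xc.
Qed.

Lemma powR_root (n : nat) (t : R) : (0 < n)%N -> 0 <= t -> (t `^ (n%:R^-1)) ^+ n = t.
Proof.
move=> n0 t0.
by rewrite -powR_mulrn ?powR_ge0 // -powRrM mulVf ?pnatr_eq0 -?lt0n // powRr1.
Qed.

Lemma powR_root' (n : nat) (t : R) : (0 < n)%N -> 0 <= t -> (t `^ (n%:R^-1)) `^ n%:R = t.
Proof.
move=> n0 t0; rewrite powR_mulrn ?powR_ge0 //; exact: powR_root.
Qed.

Lemma alnr (s : nat) (t : R) : 0 <= t ->
  t * ln ((t `^ (s.+1%:R^-1)) ^+ s) = s%:R / s.+1%:R * xlnx t.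
Proof.
rewrite le_eqVlt => /orP [/eqP <-|t0]; first by rewrite /xlnx eqxx !mul0r mulr0.
rewrite /xlnx gt_eqF // lnXn ?powR_gt0 // ln_powR.
rewrite -mulr_natl; field.
by rewrite addrC natr1 pnatr_eq0.
Qed.


Lemma ln_le_sub1 (y : R) : 0 < y -> ln y <= y - 1.
Proof.
move=> y0; have := @le_ln1Dx R (y - 1).
by rewrite [1 + _]addrC subrK; apply; lra.
Qed.

Lemma gibbs_term (b t r c Z : R) : 0 <= b -> 0 <= t -> 0 <= r -> 0 <= c -> 0 < Z ->
  (t != 0 -> [/\ 0 < b, 0 < r & 0 < c]) ->
  rterm b t <= t * (ln Z - ln r - ln c) + r * b * c / Z - t.
Proof.
move=> b0 t0 r0 c0 Z0 h; rewrite /rterm.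
case: eqP => [->|/eqP tn0].
  by rewrite mul0r add0r subr0 divr_ge0 ?mulr_ge0 ?(ltW Z0).
have [bp rp cp] := h tn0.
have tp : 0 < t by rewrite lt_neqAle eq_sym tn0.
set y := r * b * c / (Z * t).
have yp : 0 < y by rewrite divr_gt0 // ?mulr_gt0.
have ly : ln y = ln r + ln b + ln c - (ln Z + ln t).
  by rewrite /y ln_div ?posrE ?mulr_gt0 // !lnM ?posrE ?mulr_gt0.
have ty : t * y = r * b * c / Z.
  rewrite /y; field.
  by rewrite tn0 andbT gt_eqF.
have := ln_le_sub1 yp; rewrite ly => H.
have H2 : t * (ln r + ln b + ln c - (ln Z + ln t)) <= t * y - t.
  by rewrite -[in X in _ <= _ - X](mulr1 t) -mulrBr ler_wpM2l // ltW.
rewrite ty in H2.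
have E : t * (ln b - ln t) = t * (ln r + ln b + ln c - (ln Z + ln t)) + t * (ln Z - ln r - ln c).
  by ring.
rewrite E.
have -> : t * (ln Z - ln r - ln c) + r * b * c / Z - t = (r * b * c / Z - t) + t * (ln Z - ln r - ln c).
  by ring.
by rewrite lerD2r.
Qed.


Definition G (s : nat) B (w z : 'I_q -> R) :=
  bilin B (fun i => w i ^+ s) (fun j => z j ^+ s).

Lemma sum3 (F H K : 'I_q -> 'I_q -> R) :
  \sum_i \sum_j (F i j + H i j - K i j) =
  \sum_i \sum_j F i j + \sum_i \sum_j H i j - \sum_i \sum_j K i j.
Proof.
rewrite -big_split -sumrB; apply: eq_bigr => i _.
by rewrite -big_split -sumrB.
Qed.

Lemma bilin_ge_term B (r c : 'I_q -> R) i j : (forall i j, 0 <= B i j) ->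
  (forall i, 0 <= r i) -> (forall j, 0 <= c j) -> r i * B i j * c j <= bilin B r c.
Proof.
move=> B0 r0 c0; rewrite /bilin (bigD1 i) //= (bigD1 j) //= -addrA lerDl.
apply: addr_ge0; first by apply: sumr_ge0 => k _; rewrite !mulr_ge0.
by apply: sumr_ge0 => k _; apply: sumr_ge0 => l _; rewrite !mulr_ge0.
Qed.

Lemma bilin_ge0 B (r c : 'I_q -> R) : (forall i j, 0 <= B i j) ->
  (forall i, 0 <= r i) -> (forall j, 0 <= c j) -> 0 <= bilin B r c.
Proof.
move=> B0 r0 c0; apply: sumr_ge0 => i _; apply: sumr_ge0 => j _; rewrite !mulr_ge0 //.
Qed.

Lemma coupling_nz a b x : simplex a -> coupling a b x -> exists i j, x i j != 0.
Proof.
move=> [_ a1] hx; apply/not_existsP => h.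
have : \sum_i \sum_j x i j = 0.
  by apply: big1 => i _; apply: big1 => j _; apply/eqP/negPn/negP => xn; apply: (h i); exists j.
by rewrite (coupling_sum hx) a1 => /eqP; rewrite oner_eq0.
Qed.

Lemma natrS1 (s : nat) : s.+1%:R - 1 = s%:R :> R.
Proof. by rewrite -natr1 addrK. Qed.

Lemma psi1_upper s B a b x (M : R) : (forall i j, 0 <= B i j) ->
  simplex a -> simplex b -> coupling a b x -> 0 < M ->
  (forall w z, Wf s w -> Wf s z -> G s B w z <= M) ->
  (psi1_obj s.+1 B a b x <= (s.+1%:R * ln M)%:E)%E.
Proof.
move=> B0 ha hb hx M0 Mmax.
case: (pselect (exists i j, x i j != 0 /\ B i j = 0)) => [bad|good].
  by rewrite /psi1_obj xterm_ninf // gt0_muleNy ?lte_fin ?ltr0Sn // addeNy leNye.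
have hfin : forall i j, x i j != 0 -> B i j != 0.
  by move=> i j xn; apply/eqP => b0; apply: good; exists i, j.
rewrite /psi1_obj xterm_fin // -EFinM -EFinD lee_fin natrS1.
have [a0 a1] := ha; have [b0 b1] := hb; have [x0 _] := hx.
pose w' i := a i `^ (s.+1%:R^-1).
pose z' j := b j `^ (s.+1%:R^-1).
have Ww : Wf s w'.
  split=> [i|]; first exact: powR_ge0.
  by rewrite -a1; apply: eq_bigr => i _; rewrite /w' powR_root.
have Wz : Wf s z'.
  split=> [i|]; first exact: powR_ge0.
  by rewrite -b1; apply: eq_bigr => i _; rewrite /z' powR_root.
pose r' i := w' i ^+ s.
pose c' j := z' j ^+ s.
have r0 : forall i, 0 <= r' i by move=> i; rewrite exprn_ge0 ?powR_ge0.
have c0 : forall j, 0 <= c' j by move=> j; rewrite exprn_ge0 ?powR_ge0.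
set Z := bilin B r' c'.
have ZM : Z <= M by exact: Mmax.
have pos : forall i j, x i j != 0 -> [/\ 0 < B i j, 0 < r' i & 0 < c' j].
  move=> i j xn.
  have xp : 0 < x i j by rewrite lt_neqAle eq_sym xn x0.
  split.
  - by rewrite lt_neqAle eq_sym (hfin i j xn) B0.
  - by rewrite exprn_gt0 // powR_gt0 // (lt_le_trans xp) // (coupling_ge _ _ hx).
  - by rewrite exprn_gt0 // powR_gt0 // (lt_le_trans xp) // (coupling_geT _ _ hx).
have Z0 : 0 < Z.
  have [i [j xn]] := coupling_nz ha hx.
  have [Bp rp cp] := pos i j xn.
  by apply: (lt_le_trans _ (bilin_ge_term i j B0 r0 c0)); rewrite !mulr_gt0.
set S := \sum_i \sum_j rterm (B i j) (x i j).
have hS : S <= \sum_i \sum_j (x i j * (ln Z - ln (r' i) - ln (c' j)) +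
                             r' i * B i j * c' j / Z - x i j).
  apply: ler_sum => i _; apply: ler_sum => j _.
  by apply: gibbs_term; [exact: B0|exact: x0|exact: r0|exact: c0|exact: Z0|exact: pos].
rewrite sum3 (sum_split3 _ _ _ hx) a1 mulr1 (coupling_sum hx) a1 in hS.
have ZZ : \sum_i \sum_j r' i * B i j * c' j / Z = 1.
  under eq_bigr do rewrite -mulr_suml.
  by rewrite -mulr_suml divff // gt_eqF.
rewrite ZZ addrK in hS.
have ea : \sum_i a i * ln (r' i) = s%:R / s.+1%:R * \sum_i xlnx (a i).
  by rewrite mulr_sumr; apply: eq_bigr => i _; rewrite /r' /w' alnr.
have eb : \sum_j b j * ln (c' j) = s%:R / s.+1%:R * \sum_j xlnx (b j).
  by rewrite mulr_sumr; apply: eq_bigr => i _; rewrite /c' /z' alnr.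
rewrite ea eb in hS.
have lZM : ln Z <= ln M by rewrite ler_ln ?posrE.
set Xa := \sum_i xlnx (a i) in hS *.
set Xb := \sum_j xlnx (b j) in hS *.
have D0 : 0 < s.+1%:R :> R by rewrite ltr0Sn.
have : s.+1%:R * S <= s.+1%:R * (ln Z - s%:R / s.+1%:R * Xa - s%:R / s.+1%:R * Xb).
  by rewrite ler_wpM2l // ltW.
have -> : s.+1%:R * (ln Z - s%:R / s.+1%:R * Xa - s%:R / s.+1%:R * Xb) =
          s.+1%:R * ln Z - s%:R * (Xa + Xb).
  by field; rewrite gt_eqF.
have : s.+1%:R * ln Z <= s.+1%:R * ln M by rewrite ler_wpM2l // ltW.
lra.
Qed.


Lemma alnr2 (s : nat) (w : R) : 0 <= w ->
  w ^+ s.+1 * ln (w ^+ s) = s%:R / s.+1%:R * xlnx (w ^+ s.+1).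
Proof.
rewrite le_eqVlt => /orP [/eqP <-|w0].
  rewrite expr0n /=.
  by rewrite mul0r /xlnx eqxx mulr0.
rewrite /xlnx gt_eqF ?exprn_gt0 // !lnXn //.
rewrite -(mulr_natr (ln w) s) -(mulr_natr (ln w) s.+1); field; by rewrite addrC natr1 pnatr_eq0.
Qed.

Lemma psi1_exact s B (w z : 'I_q -> R) (M : R) : (forall i j, 0 <= B i j) ->
  Wf s w -> Wf s z -> 0 < M ->
  (forall i, w i ^+ s.+1 * M = w i ^+ s * (\sum_j B i j * z j ^+ s)) ->
  (forall j, z j ^+ s.+1 * M = z j ^+ s * (\sum_i w i ^+ s * B i j)) ->
  let x i j := w i ^+ s * B i j * z j ^+ s / M in
  coupling (fun i => w i ^+ s.+1) (fun j => z j ^+ s.+1) x /\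
  psi1_obj s.+1 B (fun i => w i ^+ s.+1) (fun j => z j ^+ s.+1) x = (s.+1%:R * ln M)%:E.
Proof.
move=> B0 [w0 w1] [z0 z1] M0 row col x.
have hx : coupling (fun i => w i ^+ s.+1) (fun j => z j ^+ s.+1) x.
  split; [|split].
  - by move=> i j; rewrite /x divr_ge0 ?mulr_ge0 ?exprn_ge0 ?(ltW M0).
  - move=> i; rewrite /x -mulr_suml.
    under eq_bigr do rewrite -mulrA.
    by rewrite -mulr_sumr -row mulfK // gt_eqF.
  - move=> j; rewrite /x -mulr_suml -mulr_suml.
    by rewrite [_ * z j ^+ s]mulrC -col mulfK // gt_eqF.
split => //.
have xnz : forall i j, x i j != 0 -> [/\ 0 < B i j, 0 < w i ^+ s & 0 < z j ^+ s].
  move=> i j; rewrite /x !mulf_eq0 !negb_or => /andP [/andP [/andP [wn bn] zn] _].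
  split.
  - by rewrite lt_neqAle eq_sym bn B0.
  - by rewrite lt_neqAle eq_sym wn exprn_ge0.
  - by rewrite lt_neqAle eq_sym zn exprn_ge0.
have hfin : forall i j, x i j != 0 -> B i j != 0.
  by move=> i j /xnz [bp _ _]; rewrite gt_eqF.
rewrite /psi1_obj xterm_fin // natrS1.
have -> : \sum_i \sum_j rterm (B i j) (x i j) =
   \sum_i \sum_j x i j * (ln M - ln (w i ^+ s) - ln (z j ^+ s)).
  apply: eq_bigr => i _; apply: eq_bigr => j _.
  case: (eqVneq (x i j) 0) => [->|xn]; first by rewrite /rterm eqxx mul0r.
  have [bp wp zp] := xnz i j xn.
  apply: rterm_mul => //; first by rewrite lt_neqAle eq_sym xn (hx.1 i j).
  rewrite /x ln_div ?posrE ?mulr_gt0 // !lnM ?posrE ?mulr_gt0 //.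
  by ring.
rewrite (sum_split3 _ _ _ hx) w1 mulr1.
have ea : \sum_i w i ^+ s.+1 * ln (w i ^+ s) =
          s%:R / s.+1%:R * \sum_i xlnx (w i ^+ s.+1).
  by rewrite mulr_sumr; apply: eq_bigr => i _; rewrite alnr2.
have eb : \sum_j z j ^+ s.+1 * ln (z j ^+ s) =
          s%:R / s.+1%:R * \sum_j xlnx (z j ^+ s.+1).
  by rewrite mulr_sumr; apply: eq_bigr => i _; rewrite alnr2.
rewrite ea eb -EFinM -EFinD; congr (_%:E).
by field; rewrite addrC natr1 pnatr_eq0.
Qed.


Definition pp (s : nat) : R := s.+1%:R / (s.+1%:R - 1).

Lemma pp_eq s : (0 < s)%N -> pp s = s%:R^-1 * s.+1%:R.
Proof. by move=> s0; rewrite /pp natrS1 mulrC. Qed.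

Lemma pp_gt0 s : (0 < s)%N -> 0 < pp s.
Proof. by move=> s0; rewrite pp_eq // mulr_gt0 ?invr_gt0 ?ltr0n ?ltr0Sn. Qed.

Lemma powRV (N p : R) : 0 < N -> (N^-1) `^ p = (N `^ p)^-1.
Proof.
move=> N0; rewrite /powR !gt_eqF ?invr_gt0 // lnV ?posrE // mulrN expRN //.
Qed.

Lemma pnorm_w s (w : 'I_q -> R) : (0 < s)%N -> Wf s w ->
  pnorm (pp s) (fun i => w i ^+ s) = 1.
Proof.
move=> s0 [w0 w1]; rewrite /pnorm.
have -> : \sum_i (w i ^+ s) `^ pp s = 1.
  rewrite -w1; apply: eq_bigr => i _.
  rewrite -powR_mulrn // -powRrM pp_eq // mulrA mulfV ?pnatr_eq0 -?lt0n // mul1r.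
  by rewrite powR_mulrn.
by rewrite powR1.
Qed.

Lemma pnorm_pos s (r : 'I_q -> R) : (0 < s)%N -> nonneg_nonzero r -> 0 < pnorm (pp s) r.
Proof.
move=> s0 [r0 [i ri]]; rewrite /pnorm powR_gt0 //.
apply: (@lt_le_trans _ _ (r i `^ pp s)).
  by rewrite powR_gt0 // lt_neqAle eq_sym ri r0.
rewrite (bigD1 i) //= lerDl; apply: sumr_ge0 => j _; exact: powR_ge0.
Qed.

Lemma norm_W s (r : 'I_q -> R) : (0 < s)%N -> nonneg_nonzero r ->
  Wf s (fun i => (r i / pnorm (pp s) r) `^ (s%:R^-1)).
Proof.
move=> s0 hr; have N0 := pnorm_pos s0 hr; have [r0 _] := hr.
split=> [i|]; first exact: powR_ge0.
set N := pnorm (pp s) r.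
have NS : N `^ pp s = \sum_i r i `^ pp s.
  rewrite /N /pnorm -powRrM mulVf ?gt_eqF ?pp_gt0 // powRr1 //.
  by apply: sumr_ge0 => j _; exact: powR_ge0.
have S0 : 0 < \sum_i r i `^ pp s by rewrite -NS powR_gt0.
transitivity (\sum_i r i `^ pp s / N `^ pp s); last first.
  by rewrite NS -mulr_suml divff // gt_eqF.
apply: eq_bigr => i _.
rewrite -powR_mulrn ?powR_ge0 // -powRrM -pp_eq // powRM ?invr_ge0 ?(ltW N0) //.
by rewrite powRV.
Qed.

Lemma norm_root s (r : 'I_q -> R) i : (0 < s)%N -> nonneg_nonzero r ->
  ((r i / pnorm (pp s) r) `^ (s%:R^-1)) ^+ s = r i / pnorm (pp s) r.
Proof.
move=> s0 hr; have N0 := pnorm_pos s0 hr; have [r0 _] := hr.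
by rewrite powR_root // divr_ge0 // ltW.
Qed.

Lemma alg4 (x y z u v : R) : u != 0 -> v != 0 -> x / u * y * (z / v) = x * y * z / (u * v).
Proof. by move=> u0 v0; field; rewrite u0 v0. Qed.

Lemma Phi_upper s B (r c : 'I_q -> R) (M : R) : (0 < s)%N -> (forall i j, 0 <= B i j) ->
  nonneg_nonzero r -> nonneg_nonzero c -> 0 < M ->
  (forall w z, Wf s w -> Wf s z -> G s B w z <= M) ->
  (Phi s.+1 B r c <= (s.+1%:R * ln M)%:E)%E.
Proof.
move=> s0 B0 hr hc M0 Mmax; rewrite /Phi; cbv zeta; rewrite -/(pp s).
case: ifP => [_|/negbT bn]; first exact: leNye.
have Nr := pnorm_pos s0 hr; have Nc := pnorm_pos s0 hc.
have [r0 _] := hr; have [c0 _] := hc.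
have bp : 0 < bilin B r c by rewrite lt_neqAle eq_sym bn bilin_ge0.
have := Mmax _ _ (norm_W s0 hr) (norm_W s0 hc).
rewrite /G.
have -> : bilin B (fun i => ((r i / pnorm (pp s) r) `^ (s%:R^-1)) ^+ s)
                (fun j => ((c j / pnorm (pp s) c) `^ (s%:R^-1)) ^+ s) =
          bilin B r c / (pnorm (pp s) r * pnorm (pp s) c).
  rewrite /bilin mulr_suml; apply: eq_bigr => i _; rewrite mulr_suml.
  apply: eq_bigr => j _.
  have e1 := @norm_root s r i s0 hr; have e2 := @norm_root s c j s0 hc.
  transitivity (r i / pnorm (pp s) r * B i j * (c j / pnorm (pp s) c)).
    by congr (_ * _ * _); [exact: e1 | exact: e2].
  exact: (alg4 _ _ _ (lt0r_neq0 Nr) (lt0r_neq0 Nc)).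
move=> hle; rewrite lee_fin; apply: ler_wpM2l; first exact: ler0n.
have hp : 0 < bilin B r c / (pnorm (pp s) r * pnorm (pp s) c).
  exact: (divr_gt0 bp (mulr_gt0 Nr Nc)).
by rewrite ler_ln ?posrE; [exact: hle | exact: hp | exact: M0].
Qed.

Lemma Phi_exact s B (w z : 'I_q -> R) (M : R) : (0 < s)%N ->
  Wf s w -> Wf s z -> 0 < M -> G s B w z = M ->
  Phi s.+1 B (fun i => w i ^+ s) (fun j => z j ^+ s) = (s.+1%:R * ln M)%:E.
Proof.
move=> s0 hw hz M0 GM; rewrite /Phi; cbv zeta; rewrite -/(pp s).
have -> : bilin B (fun i => w i ^+ s) (fun j => z j ^+ s) = M by [].
by rewrite gt_eqF // !pnorm_w // mulr1 divr1.
Qed.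

End M.

Lemma psi1_ninf (R : realType) (q : nat) (D : nat) (B : 'M[R]_q) (a b : 'I_q -> R) :
  (0 < D)%N -> (forall i j, B i j = 0) -> simplex a -> Psi1 D B a b = (-oo)%E.
Proof.
move=> D0 Bz ha; apply/eqP; rewrite eq_le leNye andbT.
apply: ge_ereal_sup => y [x hx <-].
have [i [j xn]] := coupling_nz ha hx.
rewrite /psi1_obj xterm_ninf; last by exists i, j; split.
by rewrite gt0_muleNy ?lte_fin ?ltr0n // addeNy.
Qed.

Lemma phi_ninf (R : realType) (q : nat) (D : nat) (B : 'M[R]_q) (r c : 'I_q -> R) :
  (forall i j, B i j = 0) -> Phi D B r c = (-oo)%E.
Proof.
move=> Bz; rewrite /Phi; cbv zeta.
have -> : bilin B r c = 0.
  by apply: big1 => i _; apply: big1 => j _; rewrite Bz mulr0 mul0r.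
by rewrite eqxx.
Qed.


End Helpers.
Import Helpers.
Unset Implicit Arguments. Set Strict Implicit.

Theorem lemma1 (R : realType) (q : nat) (D : nat) (B : 'M[R]_q) :
  (0 < q)%N -> (3 <= D)%N -> sym_nonneg_irreducible B ->
  exists (a b : 'I_q -> R) (r c : 'I_q -> R),
    [/\ simplex a /\ simplex b, nonneg_nonzero r /\ nonneg_nonzero c,
        (forall a' b', simplex a' -> simplex b' -> (Psi1 D B a' b' <= Psi1 D B a b)%E),
        (forall r' c', nonneg_nonzero r' -> nonneg_nonzero c' ->
           (Phi D B r' c' <= Phi D B r c)%E)
      & Psi1 D B a b = Phi D B r c].
Proof.
move=> hq hD [_ [B0 _]].
pose i0 : 'I_q := Ordinal hq.
pose e (k : 'I_q) : 'I_q -> R := fun i => (i == k)%:R.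
have e_simplex : forall k, simplex (e k).
  move=> k; split=> [i|]; first exact: ler0n.
  rewrite (bigD1 k) //= big1 ?addr0; first by rewrite /e eqxx.
  by move=> i /negPf hi; rewrite /e hi.
have e_nn : forall k, nonneg_nonzero (e k).
  by move=> k; split=> [i|]; [exact: ler0n | exists k; rewrite /e eqxx oner_eq0].
case: (pselect (exists i j, 0 < B i j)) => [[i1 [j1 Bp]]|Bz]; last first.
  have Bz' : forall i j, B i j = 0.
    move=> i j; apply/eqP; rewrite eq_le B0 andbT leNgt; apply/negP => h.
    by apply: Bz; exists i, j.
  have D0 : (0 < D)%N by apply: leq_trans hD.
  exists (e i0), (e i0), (e i0), (e i0); split.
  - by split.
  - by split.
  - by move=> a' b' ha' hb'; rewrite !psi1_ninf.
  - by move=> r' c' _ _; rewrite phi_ninf // leNye.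
  - by rewrite psi1_ninf // phi_ninf.
destruct D as [|s]; first by [].
have s0 : (0 < s)%N by case: s hD.
have [wv [zv [hw hz hmax]]] := @exists_max R q s s B hq.
pose w i := wv ord0 i; pose z j := zv ord0 j.
have Ww : Wf s w by exact: hw.
have Wz : Wf s z by exact: hz.
set M := G s B w z.
have Mmax : forall w' z', Wf s w' -> Wf s z' -> G s B w' z' <= M.
  move=> w' z' hw' hz'.
  have rw : forall u : 'I_q -> R, Wf s u -> @Wr R q s (\row_i u i).
    move=> u [u0 u1]; split=> [i|]; first by rewrite mxE.
    by rewrite -u1; apply: eq_bigr => i _; rewrite mxE.
  have := hmax _ _ (rw _ hw') (rw _ hz').
  have -> : Gf s B (\row_i w' i) (\row_i z' i) = G s B w' z'.
    by apply: eq_bigr => i _; apply: eq_bigr => j _; rewrite !mxE.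
  by [].
have e_W : forall k, Wf s (e k).
  move=> k; split=> [i|]; first exact: ler0n.
  rewrite (bigD1 k) //= big1 ?addr0; first by rewrite /e eqxx expr1n.
  by move=> i /negPf hi; rewrite /e hi expr0n.
have M0 : 0 < M.
  apply: (lt_le_trans Bp); apply: (le_trans _ (Mmax _ _ (e_W i1) (e_W j1))).
  have := @bilin_ge_term R q B (fun i => e i1 i ^+ s) (fun j => e j1 j ^+ s) i1 j1 B0.
  rewrite /e !eqxx expr1n mul1r mulr1; apply.
    by move=> i; rewrite exprn_ge0 ?ler0n.
  by move=> i; rewrite exprn_ge0 ?ler0n.
pose v i := \sum_j B i j * z j ^+ s.
pose v' j := \sum_i w i ^+ s * B i j.
have Gv : forall u, \sum_i u i ^+ s * v i = G s B u z.
  move=> u; apply: eq_bigr => i _; rewrite mulr_sumr; apply: eq_bigr => j _.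
  by rewrite mulrA.
have Gv' : forall u, \sum_j u j ^+ s * v' j = G s B w u.
  move=> u; rewrite /G /bilin exchange_big /=; apply: eq_bigr => j _.
  rewrite mulr_sumr; apply: eq_bigr => i _; by rewrite mulrC.
have v0 : forall i, 0 <= v i.
  by move=> i; apply: sumr_ge0 => j _; rewrite mulr_ge0 ?exprn_ge0 //; case: Wz.
have v'0 : forall j, 0 <= v' j.
  by move=> j; apply: sumr_ge0 => i _; rewrite mulr_ge0 ?exprn_ge0 //; case: Ww.
have row := @fixpt R q s v w s0 v0 Ww.
rewrite Gv in row.
have {}row : forall i, w i ^+ s.+1 * M = w i ^+ s * v i.
  apply: row => [u hu|]; last exact: M0.
  by rewrite Gv; apply: Mmax.
have col := @fixpt R q s v' z s0 v'0 Wz.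
rewrite Gv' in col.
have {}col : forall j, z j ^+ s.+1 * M = z j ^+ s * v' j.
  apply: col => [u hu|]; last exact: M0.
  by rewrite Gv'; apply: Mmax.
have [hx psiE] := @psi1_exact R q s B w z M B0 Ww Wz M0 row col.
have PsiE : Psi1 s.+1 B (fun i => w i ^+ s.+1) (fun j => z j ^+ s.+1) = (s.+1%:R * ln M)%:E.
  apply/eqP; rewrite eq_le; apply/andP; split.
    apply: ge_ereal_sup => y [x' hx' <-].
    apply: (psi1_upper B0 _ _ hx' M0 Mmax).
      by split; [move=> i; exact: exprn_ge0 (proj1 Ww i) | exact: (proj2 Ww)].
    by split; [move=> i; exact: exprn_ge0 (proj1 Wz i) | exact: (proj2 Wz)].
  rewrite -psiE; apply: ereal_sup_ubound.
  by exists (fun i j => w i ^+ s * B i j * z j ^+ s / M).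
have PhiE := @Phi_exact R q s B w z M s0 Ww Wz M0 erefl.
have nn : forall u : 'I_q -> R, Wf s u -> nonneg_nonzero (fun i => u i ^+ s).
  move=> u [u0 u1]; split=> [i|]; first exact: exprn_ge0.
  apply/not_existsP => h.
  have : \sum_i u i ^+ s.+1 = 0.
    apply: big1 => i _; apply/eqP/negPn/negP => hn; apply: (h i).
    by move: hn; rewrite exprS mulf_eq0 negb_or => /andP [].
  by rewrite u1 => /eqP; rewrite oner_eq0.
exists (fun i => w i ^+ s.+1), (fun j => z j ^+ s.+1), (fun i => w i ^+ s), (fun j => z j ^+ s).
split.
- split.
    by split; [move=> i; exact: exprn_ge0 (proj1 Ww i) | exact: (proj2 Ww)].
  by split; [move=> i; exact: exprn_ge0 (proj1 Wz i) | exact: (proj2 Wz)].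
- by split; apply: nn.
- move=> a' b' ha' hb'; rewrite PsiE.
  apply: ge_ereal_sup => y [x' hx' <-].
  exact: (psi1_upper B0 ha' hb' hx' M0 Mmax).
- move=> r' c' hr' hc'; rewrite PhiE.
  exact: (Phi_upper s0 B0 hr' hc' M0 Mmax).
- by rewrite PsiE PhiE.
Qed.
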